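(* Let $T>0$. There is a constant $C$ such that for any two $\mathbf{u},\mathbf{w}\in C([0,T];X)$, all $t\in[0,T]$ and $\mathbf{x}\in\Omega$, $$|\mathcal{L}^\epsilon[\mathbf{u}](t,\mathbf{x})-\mathcal{L}^\epsilon[\mathbf{w}](t,\mathbf{x})|\le C\,\|\mathbf{u}-\mathbf{w}\|_{C([0,T];X)}\int_\Omega\frac{\rho^\epsilon(\mathbf{y},\mathbf{x})}{|\mathbf{y}-\mathbf{x}|}\,d\mathbf{y},$$ where $C$ is independent of $\mathbf{u}$ and $\mathbf{w}$.
   Context: Let $d\in\{2,3\}$ and let $\Omega\subset\mathbb{R}^d$ be a bounded domain. Fix a horizon $\epsilon>0$, a length $L>0$ and a bond stiffness $\overline{\mu}>0$. Let $\omega_d$ be the volume of the unit ball and $V_d^\epsilon=\omega_d\epsilon^d$. Let $J:[0,\infty)\to[0,\infty)$ be positive and radially decreasing on $[0,1)$ with $J(0)=M$ and $J(r)=0$ for $r\ge1$; $J^\epsilon(s)=J(s/\epsilon)$; the kernel is $\rho^\epsilon(\mathbf{y},\mathbf{x})=\chi_\Omega(\mathbf{y})J^\epsilon(|\mathbf{y}-\mathbf{x}|)/(\epsilon V_d^\epsilon)$. For a time-dependent displacement $\mathbf{u}$ and $\mathbf{y}\ne\mathbf{x}$, $\mathbf{e}=(\mathbf{y}-\mathbf{x})/|\mathbf{y}-\mathbf{x}|$, $S(\mathbf{y},\mathbf{x},\mathbf{u}(t))=(\mathbf{u}(t,\mathbf{y})-\mathbf{u}(t,\mathbf{x}))\cdot\mathbf{e}/|\mathbf{y}-\mathbf{x}|$,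 $S^*(t,\mathbf{y},\mathbf{x},\mathbf{u})=\max_{0\le\tau\le t}S(\mathbf{y},\mathbf{x},\mathbf{u}(\tau))$, $r^*=\sqrt{|\mathbf{y}-\mathbf{x}|/L}\,S^*$. The failure envelope is $g'$ for a convex–concave potential $g$ with $0<r^L\le r^C<r^F$: $g'(r)=\overline{\mu}r$ for $r\le r^L$, nonlinear beyond $r^L$ (hardening up to $r^C$), decreasing to $0$ at $r^F$ and $g'=0$ for $r\ge r^F$ (e.g. bilinear: $g'(r)=\overline{\mu}r$ for $r<r^C$, $\overline{\mu}r^C\frac{r^F-r}{r^F-r^C}$ on $[r^C,r^F]$, $0$ beyond). The two-point phase field is $\gamma(\mathbf{u})(\mathbf{y},\mathbf{x},t)=g'(r^* )/(\overline{\mu}r^* )\in[0,1]$ ($=1$ if $r^*\le r^L$). The stiffness is $\mu(\gamma)=\overline{\mu}$ if $S(\mathbf{y},\mathbf{x},\mathbf{u}(t))\le0$ and $\overline{\mu}\gamma(\mathbf{u})(\mathbf{y},\mathbf{x},t)$ if $S>0$. The bond force is $\boldsymbol{f}^\epsilon(t,\mathbf{y},\mathbf{x},\mathbf{u})=\rho^\epsilon(\mathbf{y},\mathbf{x})\mu(\gamma(\mathbf{u})(\mathbf{y},\mathbf{x},t))S(\mathbf{y},\mathbf{x},\mathbf{u}(t))\mathbf{e}$ and $\mathcal{L}^\epsilon[\mathbf{u}](t,\mathbf{x})=-\int_\Omega\boldsymbol{f}^\epsilon(t,\mathbf{y},\mathbf{x},\mathbf{u})\,d\mathbf{y}$. $X$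 is the subspace of $L^\infty(\Omega;\mathbb{R}^d)$ $L^2$-orthogonal to the rigid motions $\{\mathbb{Q}\mathbf{x}+\mathbf{c}:\mathbb{Q}^T=-\mathbb{Q}\}$, and $C([0,T];X)$ has norm $\sup_t\|\mathbf{u}(t)\|_{L^\infty}$. *)

(* Defs.v *)
From HB Require Import structures.
From mathcomp Require Import all_boot all_order all_algebra.
From mathcomp Require Import all_classical all_reals all_analysis.
Set Implicit Arguments. Unset Strict Implicit. Unset Printing Implicit Defensive.
Import Order.TTheory GRing.Theory Num.Theory.
Import numFieldNormedType.Exports.
Local Open Scope classical_set_scope.
Local Open Scope ring_scope.

Section PD.
Variable R : realType.

Definition dotv {d : nat} (a b : 'rV[R]_d) : R := \sum_i a 0 i * b 0 i.
Definition enorm {d : nat} (a : 'rV[R]_d) : R := Num.sqrt (dotv a a).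

Definition bond_e {d : nat} (y x : 'rV[R]_d) : 'rV[R]_d := (enorm (y - x))^-1 *: (y - x).
Definition strain {d : nat} (y x : 'rV[R]_d) (v : 'rV[R]_d -> 'rV[R]_d) : R :=
  dotv (v y - v x) (bond_e y x) / enorm (y - x).

Definition strain_max {d : nat} (u : R -> 'rV[R]_d -> 'rV[R]_d) (t : R) (y x : 'rV[R]_d) : R :=
  sup [set s | exists2 tau, 0 <= tau <= t & s = strain y x (u tau)].

Definition rstar {d : nat} (L : R) (u : R -> 'rV[R]_d -> 'rV[R]_d) (t : R) (y x : 'rV[R]_d) : R :=
  Num.sqrt (enorm (y - x) / L) * strain_max u t y x.

Definition phase {d : nat} (gp : R -> R) (mubar rL L : R) (u : R -> 'rV[R]_d -> 'rV[R]_d)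
  (t : R) (y x : 'rV[R]_d) : R :=
  let r := rstar L u t y x in if r <= rL then 1 else gp r / (mubar * r).

Definition stiffness {d : nat} (gp : R -> R) (mubar rL L : R) (u : R -> 'rV[R]_d -> 'rV[R]_d)
  (t : R) (y x : 'rV[R]_d) : R :=
  if strain y x (u t) <= 0 then mubar else mubar * phase gp mubar rL L u t y x.

Definition kernel {d : nat} (Omega : set 'rV[R]_d) (J : R -> R) (omega_d eps : R)
  (y x : 'rV[R]_d) : R :=
  (if `[< Omega y >] then 1 else 0) * J (enorm (y - x) / eps) / (eps * (omega_d * eps ^+ d)).

Definition bond_force {d : nat} (Omega : set 'rV[R]_d) (J : R -> R) (omega_d eps : R)
  (gp : R -> R) (mubar rL L : R) (u : R -> 'rV[R]_d -> 'rV[R]_d) (t : R) (y x : 'rV[R]_d)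
  : 'rV[R]_d :=
  (kernel Omega J omega_d eps y x * stiffness gp mubar rL L u t y x * strain y x (u t))
    *: bond_e y x.

(* L^eps[u](t,x) = - int_Omega f^eps(t,y,x,u) dy  (componentwise Lebesgue integral);
   points of R^d are represented in the measure space T through coord : T -> 'rV_d *)
Definition peri_op {d : nat} {dT : measure_display} {T : measurableType dT}
  (mu : {measure set T -> \bar R}) (coord : T -> 'rV[R]_d)
  (Omega : set 'rV[R]_d) (J : R -> R) (omega_d eps : R)
  (gp : R -> R) (mubar rL L : R) (u : R -> 'rV[R]_d -> 'rV[R]_d) (t : R) (x : 'rV[R]_d)
  : 'rV[R]_d :=
  \row_i (- Rintegral mu (coord @^-1` Omega)
              (fun z => bond_force Omega J omega_d eps gp mubar rL L u t (coord z) x 0 i)).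

Definition CX_norm {d : nat} (T0 : R) (Omega : set 'rV[R]_d) (u : R -> 'rV[R]_d -> 'rV[R]_d) : R :=
  sup [set s | exists t y, [/\ 0 <= t <= T0, Omega y & s = enorm (u t y)]].

(* u in C([0,T];X): X = bounded measurable fields on Omega, L^2-orthogonal to rigid motions
   {x |-> Q x + c : Q^T = -Q}; continuity in t for the sup norm. *)
Definition in_CX {d : nat} {dT : measure_display} {T : measurableType dT}
  (mu : {measure set T -> \bar R}) (coord : T -> 'rV[R]_d)
  (T0 : R) (Omega : set 'rV[R]_d) (u : R -> 'rV[R]_d -> 'rV[R]_d) : Prop :=
  [/\ (forall t, 0 <= t <= T0 -> forall i,
         measurable_fun (coord @^-1` Omega) (fun z => u t (coord z) 0 i)),
      (exists B, forall t y, 0 <= t <= T0 -> Omega y -> enorm (u t y) <= B),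
      (forall t, 0 <= t <= T0 -> forall e : R, 0 < e -> exists2 delta : R, 0 < delta &
         forall s, 0 <= s <= T0 -> `|s - t| < delta ->
           forall y, Omega y -> enorm (u s y - u t y) <= e)
    & (forall t, 0 <= t <= T0 -> forall (Q : 'M[R]_d) (c : 'rV[R]_d), Q^T = - Q ->
         Rintegral mu (coord @^-1` Omega)
           (fun z => dotv (u t (coord z)) (coord z *m Q^T + c)) = 0)].

(* The claim, for a given model (T, mu, coord) of Lebesgue measure on R^d. *)
Definition lipschitz_claim (d : nat) {dT : measure_display} {T : measurableType dT}
  (mu : {measure set T -> \bar R}) (coord : T -> 'rV[R]_d) (omega_d : R) : Prop :=
  forall (Omega : set 'rV[R]_d) (eps L mubar M T0 rL rC rF : R) (J gp : R -> R),
  open Omega -> connected Omega -> Omega !=set0 ->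
  (exists B, forall y, Omega y -> enorm y <= B) ->
  measurable (coord @^-1` Omega) ->
  0 < eps -> 0 < L -> 0 < mubar -> 0 < T0 ->
  (forall r, 0 <= r < 1 -> 0 < J r) ->
  (forall r s, 0 <= r <= s -> s < 1 -> J s <= J r) ->
  J 0 = M ->
  (forall r, 1 <= r -> J r = 0) ->
  0 < rL -> rL <= rC -> rC < rF ->
  (forall r, 0 <= r <= rL -> gp r = mubar * r) ->
  (forall r s, rL <= r <= s -> s <= rC -> gp r <= gp s) ->
  (forall r s, rC <= r <= s -> s <= rF -> gp s <= gp r) ->
  (forall r, rF <= r -> gp r = 0) ->
  (forall r, 0 <= r -> 0 <= gp r <= mubar * r) ->
  (exists K, forall r s, 0 <= r -> 0 <= s -> `|gp r - gp s| <= K * `|r - s|) ->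
  exists C : R, forall u w : R -> 'rV[R]_d -> 'rV[R]_d,
    in_CX mu coord T0 Omega u -> in_CX mu coord T0 Omega w ->
    forall t x, 0 <= t <= T0 -> Omega x ->
    ((enorm (peri_op mu coord Omega J omega_d eps gp mubar rL L u t x
             - peri_op mu coord Omega J omega_d eps gp mubar rL L w t x))%:E
     <= (C * CX_norm T0 Omega (fun s y => u s y - w s y))%:E
        * \int[mu]_(z in coord @^-1` Omega)
             (kernel Omega J omega_d eps (coord z) x / enorm (coord z - x))%:E)%E.

Definition coord2 (p : R * R) : 'rV[R]_2 := \row_(i < 2) [:: p.1; p.2]`_i.
Definition coord3 (p : (R * R) * R) : 'rV[R]_3 := \row_(i < 3) [:: p.1.1; p.1.2; p.2]`_i.
Definition leb2 := (@lebesgue_measure R \x @lebesgue_measure R)%E.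
Definition leb3 := ((@lebesgue_measure R \x @lebesgue_measure R) \x @lebesgue_measure R)%E.

End PD.

(* Main.v *)
Require Import Defs.
From HB Require Import structures.
From mathcomp Require Import all_boot all_order all_algebra.
From mathcomp Require Import all_classical all_reals all_analysis.
From mathcomp Require Import ring lra measurable_realfun.
Set Implicit Arguments. Unset Strict Implicit. Unset Printing Implicit Defensive.
Import Order.TTheory GRing.Theory Num.Theory.
Import numFieldNormedType.Exports.
Local Open Scope classical_set_scope.
Local Open Scope ring_scope.

Section Euclid.
Variables (R : realType) (d : nat).
Implicit Types a b : 'rV[R]_d.

Lemma dotvC a b : dotv a b = dotv b a.
Proof. by apply: eq_bigr => i _; rewrite mulrC. Qed.

Lemma dotvDl a b c : dotv (a + b) c = dotv a c + dotv b c.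
Proof. by rewrite /dotv -big_split; apply: eq_bigr => i _; rewrite !mxE mulrDl. Qed.

Lemma dotvNl a c : dotv (- a) c = - dotv a c.
Proof. by rewrite /dotv -sumrN; apply: eq_bigr => i _; rewrite !mxE mulNr. Qed.

Lemma dotvBl a b c : dotv (a - b) c = dotv a c - dotv b c.
Proof. by rewrite dotvDl dotvNl. Qed.

Lemma dotvZl (k : R) a c : dotv (k *: a) c = k * dotv a c.
Proof. by rewrite /dotv mulr_sumr; apply: eq_bigr => i _; rewrite !mxE mulrA. Qed.

Lemma dotv_ge0 a : 0 <= dotv a a.
Proof. by apply: sumr_ge0 => i _; rewrite -expr2 sqr_ge0. Qed.

Lemma enorm_ge0 a : 0 <= enorm a.
Proof. exact: sqrtr_ge0. Qed.

Lemma enorm_sqr a : enorm a ^+ 2 = dotv a a.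
Proof. by rewrite /enorm sqr_sqrtr // dotv_ge0. Qed.

Lemma enorm0P a : enorm a = 0 -> forall i, a 0 i = 0.
Proof.
move=> h i; have : dotv a a = 0 by rewrite -enorm_sqr h expr2 mulr0.
move/eqP; rewrite psumr_eq0; last by move=> j _; rewrite -expr2 sqr_ge0.
by move/allP => /(_ i (mem_index_enum _)) /=; rewrite mulf_eq0 orbb => /eqP.
Qed.

Lemma comp_le_enorm a i : `|a 0 i| <= enorm a.
Proof.
rewrite -ler_sqr ?nnegrE ?enorm_ge0 // enorm_sqr real_normK ?num_real//.
rewrite /dotv (bigD1 i) //= expr2 lerDl; apply: sumr_ge0 => j _; by rewrite -expr2 sqr_ge0.
Qed.

Lemma CS a b : `|dotv a b| <= enorm a * enorm b.
Proof.
have [a0|an0] := eqVneq (enorm a) 0.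
  rewrite a0 mul0r /dotv big1 ?normr0 // => i _; by rewrite (enorm0P a0) mul0r.
have [b0|bn0] := eqVneq (enorm b) 0.
  rewrite b0 mulr0 /dotv big1 ?normr0 // => i _; by rewrite (enorm0P b0) mulr0.
set al := enorm a; set be := enorm b.
have alp : 0 < al by rewrite lt_neqAle eq_sym an0 enorm_ge0.
have bep : 0 < be by rewrite lt_neqAle eq_sym bn0 enorm_ge0.
have h : 2 * (al * be) * `|dotv a b| <= 2 * (al * be) * (al * be).
  apply: (le_trans (y := 2 * (al * be) * \sum_i `|a 0 i * b 0 i|)).
    by rewrite ler_wpM2l ?ler_norm_sum // mulr_ge0 // mulr_ge0 // ltW.
  rewrite mulr_sumr.
  apply: (le_trans (y := \sum_i (be ^+ 2 * (a 0 i * a 0 i) + al ^+ 2 * (b 0 i * b 0 i)))).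
    apply: ler_sum => i _; rewrite normrM.
    have ea : a 0 i * a 0 i = `|a 0 i| * `|a 0 i| by rewrite -!expr2 real_normK ?num_real.
    have eb : b 0 i * b 0 i = `|b 0 i| * `|b 0 i| by rewrite -!expr2 real_normK ?num_real.
    rewrite ea eb; have := sqr_ge0 (be * `|a 0 i| - al * `|b 0 i|); nra.
  rewrite big_split /= -!mulr_sumr -/(dotv a a) -/(dotv b b) -!enorm_sqr.
  by rewrite -/al -/be le_eqVlt; apply/orP; left; apply/eqP; ring.
by rewrite ler_pM2l in h; rewrite // mulr_gt0 // mulr_gt0.
Qed.

Lemma enormN a : enorm (- a) = enorm a.
Proof. by rewrite /enorm dotvNl dotvC dotvNl opprK. Qed.

Lemma enormD a b : enorm (a + b) <= enorm a + enorm b.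
Proof.
rewrite -ler_sqr ?nnegrE ?enorm_ge0 ?addr_ge0 ?enorm_ge0 // enorm_sqr sqrrD !enorm_sqr.
rewrite dotvDl !(dotvC _ (a + b)) !dotvDl (dotvC b a).
have := ler_norm (dotv a b); have := CS a b => h1 h2.
have : dotv a b <= enorm a * enorm b := le_trans h2 h1.
rewrite mulr2n; lra.
Qed.

Lemma enormB a b : enorm (a - b) <= enorm a + enorm b.
Proof. by rewrite -(enormN b); apply: enormD. Qed.

Lemma enorm_le_sum a : enorm a <= \sum_i `|a 0 i|.
Proof.
have s0 : 0 <= \sum_i `|a 0 i| by apply: sumr_ge0.
rewrite -ler_sqr ?nnegrE ?enorm_ge0 //.
rewrite enorm_sqr expr2 mulr_sumr /dotv; apply: ler_sum => i _.
rewrite -[a 0 i * a 0 i]/(a 0 i ^+ 2) -real_normK ?num_real // expr2 ler_wpM2r //.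
by rewrite (bigD1 i) //= lerDl; apply: sumr_ge0.
Qed.

Lemma enormZ (k : R) a : enorm (k *: a) = `|k| * enorm a.
Proof.
rewrite /enorm dotvZl dotvC dotvZl mulrA -expr2 sqrtrM ?sqr_ge0 //.
by rewrite sqrtr_sqr.
Qed.

Lemma enorm_bond_e (y x : 'rV[R]_d) : enorm (bond_e y x) <= 1.
Proof.
rewrite /bond_e enormZ ger0_norm ?invr_ge0 ?enorm_ge0 //.
have [->|n0] := eqVneq (enorm (y - x)) 0; first by rewrite invr0 mul0r ler01.
by rewrite mulVf.
Qed.

End Euclid.

Section Scalar.
Variables (R : realType) (mubar rL K : R) (gp : R -> R).
Hypothesis mu0 : 0 < mubar.
Hypothesis rL0 : 0 < rL.
Hypothesis K0 : 0 <= K.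
Hypothesis gpL : forall r, 0 <= r <= rL -> gp r = mubar * r.
Hypothesis gpB : forall r, 0 <= r -> 0 <= gp r <= mubar * r.
Hypothesis gpK : forall r s, 0 <= r -> 0 <= s -> `|gp r - gp s| <= K * `|r - s|.

Definition hfun (r : R) := if r <= rL then mubar else gp r / r.

Lemma hfunE r : 0 < r -> hfun r = gp r / r.
Proof.
move=> r0; rewrite /hfun; case: ifP => // h.
by rewrite gpL ?(ltW r0) ?h // mulfK // gt_eqF.
Qed.

Lemma hfun_bnd r : 0 < r -> 0 <= hfun r <= mubar.
Proof.
move=> r0; rewrite hfunE //; have /andP[g0 g1] := gpB (ltW r0).
rewrite divr_ge0 ?(ltW r0) //= ler_pdivrMr //.
Qed.

Lemma hfun_lip r s : 0 < r -> 0 < s -> s * `|hfun r - hfun s| <= (K + mubar) * `|r - s|.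
Proof.
move=> r0 s0; have := hfun_bnd r0; rewrite !hfunE // => /andP[h0 h1].
have e : s * (gp r / r - gp s / s) = (gp r - gp s) + gp r / r * (s - r).
  by field; rewrite ?gt_eqF.
have -> : s * `|gp r / r - gp s / s| = `|s * (gp r / r - gp s / s)|.
  by rewrite normrM (ger0_norm (ltW s0)).
rewrite e.
apply: (le_trans (ler_normD _ _)); rewrite mulrDl; apply: lerD.
  exact: gpK (ltW r0) (ltW s0).
by rewrite normrM ger0_norm // distrC ler_wpM2r.
Qed.

Definition Gfun (c S s : R) :=
  (if S <= 0 then mubar else mubar * (let r := c * s in if r <= rL then 1 else gp r / (mubar * r))) * S.

Lemma GfunE c S s : Gfun c S s = if S <= 0 then mubar * S else hfun (c * s) * S.
Proof.
rewrite /Gfun /hfun; case: ifP => // _; case: ifP => _; first by rewrite mulr1.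
by congr (_ * _); rewrite invfM mulrCA [mubar * (_ * _)]mulrA mulfV ?gt_eqF // mul1r.
Qed.

Lemma Gfun_bnd c S s : 0 < c -> S <= s -> `|Gfun c S s| <= mubar * `|S|.
Proof.
move=> c0 Ss; rewrite GfunE; case: ifP => S0; first by rewrite normrM (ger0_norm (ltW mu0)).
have S0' : 0 < S by rewrite ltNge S0.
have /andP[h0 h1] := hfun_bnd (mulr_gt0 c0 (lt_le_trans S0' Ss)).
by rewrite normrM ger0_norm // ler_wpM2r.
Qed.

Lemma Gfun_lip c Su Sw su sw : 0 < c -> Su <= su -> Sw <= sw ->
  `|Gfun c Su su - Gfun c Sw sw| <= mubar * `|Su - Sw| + (K + mubar) * `|su - sw|.
Proof.
move=> c0 Hu Hw; rewrite !GfunE.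
have Kp : 0 <= (K + mubar) * `|su - sw| by rewrite mulr_ge0 ?addr_ge0 // ltW.
have Hle : mubar * `|Su - Sw| <= mubar * `|Su - Sw| + (K + mubar) * `|su - sw| by rewrite lerDl.
have [Su0|Su0'] := leP Su 0; have [Sw0|Sw0'] := leP Sw 0.
- by rewrite -mulrBr normrM (ger0_norm (ltW mu0)) lerDl.
- have /andP[h0 h1] := hfun_bnd (mulr_gt0 c0 (lt_le_trans Sw0' Hw)).
  apply: le_trans Hle.
  have -> : `|Su - Sw| = Sw - Su by rewrite distrC ger0_norm // subr_ge0 (le_trans Su0) // ltW.
  rewrite ler_norml; apply/andP; split; nra.
- have /andP[h0 h1] := hfun_bnd (mulr_gt0 c0 (lt_le_trans Su0' Hu)).
  apply: le_trans Hle.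
  have -> : `|Su - Sw| = Su - Sw by rewrite ger0_norm // subr_ge0 (le_trans Sw0) // ltW.
  rewrite ler_norml; apply/andP; split; nra.
- have a0 : 0 < c * su by rewrite mulr_gt0 // (lt_le_trans Su0' Hu).
  have b0 : 0 < c * sw by rewrite mulr_gt0 // (lt_le_trans Sw0' Hw).
  have /andP[h0 h1] := hfun_bnd a0.
  have L := hfun_lip a0 b0.
  rewrite -mulrBr normrM (ger0_norm (ltW c0)) in L.
  have L2 : sw * `|hfun (c * su) - hfun (c * sw)| <= (K + mubar) * `|su - sw|.
    rewrite -(ler_pM2l c0) mulrA; apply: (le_trans L); rewrite le_eqVlt; apply/orP; left; apply/eqP; ring.
  have e : hfun (c * su) * Su - hfun (c * sw) * Sw
     = hfun (c * su) * (Su - Sw) + Sw * (hfun (c * su) - hfun (c * sw)) by ring.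
  rewrite e; apply: (le_trans (ler_normD _ _)); apply: lerD.
    by rewrite normrM ger0_norm // ler_wpM2r.
  apply: le_trans L2; rewrite normrM (ger0_norm (ltW Sw0')) ler_wpM2r //.
Qed.

End Scalar.

Section Strain.
Variables (R : realType) (d : nat).
Implicit Types (y x : 'rV[R]_d) (v : 'rV[R]_d -> 'rV[R]_d).

Lemma strainB y x v1 v2 :
  strain y x (fun p => v1 p - v2 p) = strain y x v1 - strain y x v2.
Proof.
rewrite /strain -mulrBl -dotvBl; congr (dotv _ _ / _).
by rewrite opprD opprK addrACA [in RHS]opprD opprK.
Qed.

Lemma strain_bnd y x v :
  `|strain y x v| <= (enorm (v y) + enorm (v x)) / enorm (y - x).
Proof.
rewrite /strain normrM normfV (ger0_norm (enorm_ge0 _)).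
apply: ler_wpM2r; first by rewrite invr_ge0 enorm_ge0.
apply: le_trans (CS _ _) _.
apply: le_trans (ler_wpM2l (enorm_ge0 _) (enorm_bond_e y x)) _.
by rewrite mulr1 enormB.
Qed.

Lemma strain_n0 y x v : enorm (y - x) = 0 -> strain y x v = 0.
Proof. by move=> h; rewrite /strain h invr0 mulr0. Qed.

End Strain.

Section Grid.
Variable R : realType.

Definition grid (t : R) (n : nat) : R :=
  match @pickle_inv (nat * nat)%type n with
  | Some (k, m) => t * Num.min 1 (k%:R / m.+1%:R)
  | None => 0
  end.

Lemma grid_in t n : 0 <= t -> 0 <= grid t n <= t.
Proof.
move=> t0; rewrite /grid; case: pickle_inv => [[k m]|]; last by rewrite lexx t0.
have h0 : 0 <= Num.min 1 (k%:R / m.+1%:R :> R) by rewrite le_min ler01 divr_ge0.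
have h1 : Num.min 1 (k%:R / m.+1%:R :> R) <= 1 by rewrite ge_min lexx.
by rewrite mulr_ge0 //= ler_piMr.
Qed.

Lemma grid_dense t tau delta : 0 <= t -> 0 <= tau <= t -> 0 < delta ->
  exists n, `|grid t n - tau| < delta.
Proof.
move=> t0 /andP[tau0 taut] d0.
have [tp|tp] := eqVneq t 0.
  exists 0%N; have -> : tau = 0 by apply/le_anti; rewrite tau0 andbT; move: taut; by rewrite tp.
  by rewrite /grid; case: pickle_inv => [[k m]|]; rewrite ?tp ?mul0r subrr normr0.
have tp' : 0 < t by rewrite lt_neqAle eq_sym tp t0.
have [m hm] : exists m : nat, t < m.+1%:R * delta.
  exists (Num.truncn (t / delta)); rewrite -ltr_pdivrMr //; exact: Num.Theory.truncnS_gt.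
have m1 : 0 < m.+1%:R :> R by rewrite ltr0Sn.
have hk0 : 0 <= tau * m.+1%:R / t by rewrite divr_ge0 // mulr_ge0 // ltW.
have [k [hk1 hk2]] : exists k : nat, k%:R * t <= tau * m.+1%:R /\ tau * m.+1%:R < (k%:R + 1) * t.
  exists (Num.truncn (tau * m.+1%:R / t)).
  have /andP[h1 h2] := Num.Theory.truncn_itv hk0.
  move: h1 h2; rewrite ler_pdivlMr // ltr_pdivrMr // => h1 h2; split => //; by rewrite natr1.
exists (pickle (k, m)); rewrite /grid pickleK_inv.
set M := m.+1%:R in hm m1 hk1 hk2 *.
have km : k%:R / M <= 1 :> R.
  rewrite ler_pdivrMr // mul1r -(ler_pM2r tp'); apply: le_trans hk1 _.
  by rewrite mulrC ler_wpM2l // ltW.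
rewrite (min_idPr km).
have eM : t * (k%:R / M) * M = t * k%:R by rewrite mulrA divfK // gt_eqF.
have e1 : t * (k%:R / M) <= tau.
  by rewrite -(ler_pM2r m1) eM; lra.
have e2 : tau < t * (k%:R / M) + delta.
  by rewrite -(ltr_pM2r m1) mulrDl eM; lra.
rewrite distrC ger0_norm ?subr_ge0 //.
by rewrite ltrBlDr addrC.
Qed.

End Grid.

Section Smax.
Variables (R : realType) (d : nat).
Implicit Types (y x : 'rV[R]_d) (u w : R -> 'rV[R]_d -> 'rV[R]_d).

Definition Sset u t y x := [set s | exists2 tau, 0 <= tau <= t & s = strain y x (u tau)].

Lemma Sset_ub u t y x M : (forall tau, 0 <= tau <= t -> `|strain y x (u tau)| <= M) ->
  has_ubound (Sset u t y x).
Proof.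
move=> h; exists M => _ [tau ht ->]; exact: le_trans (ler_norm _) (h _ ht).
Qed.

Lemma Sset_n0 u t y x : 0 <= t -> Sset u t y x !=set0.
Proof. by move=> t0; exists (strain y x (u 0)), 0; rewrite ?lexx. Qed.

Lemma smax_ge u t y x M tau : (forall tau, 0 <= tau <= t -> `|strain y x (u tau)| <= M) ->
  0 <= tau <= t -> strain y x (u tau) <= strain_max u t y x.
Proof. by move=> h ht; apply: (ub_le_sup (Sset_ub h)); exists tau. Qed.

Lemma smax_le u t y x b : 0 <= t ->
  (forall tau, 0 <= tau <= t -> strain y x (u tau) <= b) -> strain_max u t y x <= b.
Proof. by move=> t0 h; apply: ge_sup (Sset_n0 u y x t0) _ => _ [tau ht ->]; apply: h. Qed.

Lemma smax_diff u w t y x Mu Mw del : 0 <= t ->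
  (forall tau, 0 <= tau <= t -> `|strain y x (u tau)| <= Mu) ->
  (forall tau, 0 <= tau <= t -> `|strain y x (w tau)| <= Mw) ->
  (forall tau, 0 <= tau <= t -> `|strain y x (u tau) - strain y x (w tau)| <= del) ->
  `|strain_max u t y x - strain_max w t y x| <= del.
Proof.
move=> t0 hu hw hd.
have h1 : strain_max w t y x <= strain_max u t y x + del.
  apply: smax_le => // tau ht.
  have := hd _ ht; rewrite ler_norml => /andP[h1 _].
  have := smax_ge hu ht; lra.
have h2 : strain_max u t y x <= strain_max w t y x + del.
  apply: smax_le => // tau ht.
  have := hd _ ht; rewrite ler_norml => /andP[_ h2].
  have := smax_ge hw ht; lra.
rewrite ler_norml; apply/andP; split; lra.
Qed.

Lemma smax_grid u t y x M : 0 <= t ->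
  (forall tau, 0 <= tau <= t -> `|strain y x (u tau)| <= M) ->
  (forall tau, 0 <= tau <= t -> forall e : R, 0 < e -> exists2 del : R, 0 < del &
     forall s, 0 <= s <= t -> `|s - tau| < del -> `|strain y x (u s) - strain y x (u tau)| <= e) ->
  strain_max u t y x = sups (fun n => strain y x (u (grid t n))) 0.
Proof.
move=> t0 hM hc.
have ubg : has_ubound (sdrop (fun n => strain y x (u (grid t n))) 0).
  exists M => _ [n _ <-]; exact: le_trans (ler_norm _) (hM _ (grid_in n t0)).
have ng : sdrop (fun n => strain y x (u (grid t n))) 0 !=set0.
  by exists (strain y x (u (grid t 0))), 0%N.
rewrite /sups /=; apply/le_anti/andP; split; last first.
  apply: ge_sup ng _ => _ [n _ <-]; exact: smax_ge hM (grid_in n t0).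
apply: smax_le => // tau ht; apply/ler_addgt0Pr => e e0.
have [del d0 hd] := hc _ ht e e0.
have [n hn] := grid_dense t0 ht d0.
have := hd _ (grid_in n t0) hn.
have : strain y x (u (grid t n)) <= sup (sdrop (fun n => strain y x (u (grid t n))) 0).
  by apply: (ub_le_sup ubg); exists n.
rewrite ler_norml; lra.
Qed.

End Smax.

Lemma m_inv (R : realType) : measurable_fun [set: R] (@GRing.inv R).
Proof.
apply: (@eq_measurable_fun _ _ _ _ _ (fun r : R => if r == 0 then 0 else r^-1)).
  by move=> r _; case: eqP => // ->; rewrite invr0.
apply: measurable_fun_if => //.
- exact: measurable_fun_eqr.
rewrite setTI (_ : _ @^-1` _ = [set r : R | r != 0]); last first.
  by apply/seteqP; split => r /=; case: eqP.
apply: open_continuous_measurable_fun; first exact: open_neq.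
by move=> r; rewrite inE /= => r0; apply: inv_continuous.
Qed.

Lemma lip_cont (R : realType) (f : R -> R) K :
  (forall r s, `|f r - f s| <= K * `|r - s|) -> continuous f.
Proof.
move=> h x; apply/cvgrPdist_lt => e e0.
have K1 : 0 < `|K| + 1 by rewrite ltr_wpDl.
near=> y.
apply: le_lt_trans (h x y) _.
apply: (@le_lt_trans _ _ ((`|K| + 1) * `|x - y|)).
  by rewrite ler_wpM2r // (le_trans (ler_norm K)) // lerDl.
rewrite -ltr_pdivlMl //. near: y.
apply/nbhs_normP; exists (e / (`|K|+1)); first by rewrite /= divr_gt0.
by move=> z /=; rewrite mulrC.
Unshelve. all: by end_near. Qed.

Section Meas.
Variables (R : realType) (d : nat) (dT : measure_display) (T : measurableType dT).
Variable coord : T -> 'rV[R]_d.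
Hypothesis hc : forall j, measurable_fun setT (fun z => coord z 0 j).
Variable D : set T.
Hypothesis mD : measurable D.

Lemma mc j : measurable_fun D (fun z => coord z 0 j).
Proof. exact: measurable_funTS. Qed.

Lemma mif (b : T -> bool) (f g : T -> R) : measurable_fun D b ->
  measurable_fun D f -> measurable_fun D g ->
  measurable_fun D (fun z => if b z then f z else g z).
Proof.
move=> mb mf mg; apply: measurable_fun_if => //.
  by apply: measurable_funS mf => //; exact: subIsetl.
by apply: measurable_funS mg => //; exact: subIsetl.
Qed.

Lemma minvD (f : T -> R) : measurable_fun D f -> measurable_fun D (fun z => (f z)^-1).
Proof. by move=> mf; apply: measurableT_comp (@m_inv R) mf. Qed.

Lemma m_enorm x : measurable_fun D (fun z => enorm (coord z - x)).
Proof.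
rewrite (_ : (fun z => _) = (fun z => Num.sqrt (\sum_i ((coord z 0 i - x 0 i) * (coord z 0 i - x 0 i))))).
  apply: measurableT_comp; first exact: continuous_measurable_fun (@sqrt_continuous R).
  apply: measurable_sum => i; apply: measurable_funM; apply: measurable_funB => //; exact: mc.
by apply/funext => z; rewrite /enorm /dotv; congr Num.sqrt; apply: eq_bigr => i _; rewrite !mxE.
Qed.

Lemma m_strain x (v : 'rV[R]_d -> 'rV[R]_d) : (forall i, measurable_fun D (fun z => v (coord z) 0 i)) ->
  measurable_fun D (fun z => strain (coord z) x v).
Proof.
move=> mv.
rewrite (_ : (fun z => _) = (fun z => (\sum_i ((v (coord z) 0 i - v x 0 i) *
   ((enorm (coord z - x))^-1 * (coord z 0 i - x 0 i)))) * (enorm (coord z - x))^-1)).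
  apply: measurable_funM; last exact: minvD (m_enorm x).
  apply: measurable_sum => i; apply: measurable_funM.
    by apply: measurable_funB => //.
  apply: measurable_funM; first exact: minvD (m_enorm x).
  by apply: measurable_funB => //; exact: mc.
by apply/funext => z; rewrite /strain /dotv /bond_e; congr (_ * _); apply: eq_bigr => i _; rewrite !mxE.
Qed.

Lemma m_smax (u : R -> 'rV[R]_d -> 'rV[R]_d) t x : 0 <= t ->
  (forall tau, 0 <= tau <= t -> forall i, measurable_fun D (fun z => u tau (coord z) 0 i)) ->
  (forall z, D z -> exists M, 
     (forall tau, 0 <= tau <= t -> `|strain (coord z) x (u tau)| <= M) /\
     (forall tau, 0 <= tau <= t -> forall e : R, 0 < e -> exists2 del : R, 0 < del &
       forall s, 0 <= s <= t -> `|s - tau| < del ->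
         `|strain (coord z) x (u s) - strain (coord z) x (u tau)| <= e)) ->
  measurable_fun D (fun z => strain_max u t (coord z) x).
Proof.
move=> t0 mu hz.
apply: (@eq_measurable_fun _ _ _ _ _ (fun z => sups (fun n => strain (coord z) x (u (grid t n))) 0)).
  move=> z; rewrite inE => Dz; have [M [h1 h2]] := hz z Dz.
  by rewrite (smax_grid t0 h1 h2).
apply: (@measurable_fun_sups _ _ _ D (fun n z => strain (coord z) x (u (grid t n)))).
  move=> z Dz; have [M [h1 _]] := hz z Dz.
  by exists M => _ [n _ <-]; exact: le_trans (ler_norm _) (h1 _ (grid_in n t0)).
by move=> n; apply: m_strain; apply: mu; exact: grid_in.
Qed.

End Meas.

Section Phi.
Variables (R : realType) (mubar rL K : R) (gp : R -> R).
Hypothesis rL0 : 0 < rL.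
Hypothesis K0 : 0 <= K.
Hypothesis gpK : forall r s, 0 <= r -> 0 <= s -> `|gp r - gp s| <= K * `|r - s|.

Lemma max0_lip (r s : R) : `|Num.max r 0 - Num.max s 0| <= `|r - s|.
Proof.
have h1 := ler_norm (r - s); have h2 := ler_norm (s - r); rewrite distrC in h2.
rewrite ler_norml; have [hr|hr] := leP 0 r; have [hs|hs] := leP 0 s;
  rewrite ?(max_l hr) ?(max_l hs) ?(max_r (ltW hr)) ?(max_r (ltW hs)); apply/andP; split; lra.
Qed.

Lemma m_phi : measurable_fun [set: R] (fun r => if r <= rL then 1 else gp r / (mubar * r)).
Proof.
apply: measurable_fun_if => //.
  by apply: measurable_fun_ler => //; exact: measurable_cst.
apply: (eq_measurable_fun (fun r : R => gp (Num.max r 0) * (mubar * r)^-1)).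
  move=> r; rewrite inE /= => -[_ /negbT]; rewrite -ltNge => h.
  by rewrite max_l // ltW // (lt_trans rL0 h).
apply: measurable_funM.
  apply: measurable_funTS; apply: continuous_measurable_fun.
  apply: (@lip_cont _ _ K) => r s; apply: le_trans (gpK _ _) _; rewrite ?le_max ?lexx ?orbT //.
  by rewrite ler_wpM2l // max0_lip.
apply: measurable_funTS; apply: measurableT_comp (@m_inv R) _ => //.
Qed.
End Phi.

Section Main.
Variables (R : realType) (d : nat) (dT : measure_display) (T : measurableType dT).
Variable mu : {measure set T -> \bar R}.
Variable coord : T -> 'rV[R]_d.
Hypothesis hc : forall j, measurable_fun setT (fun z => coord z 0 j).
Variable omega_d : R.
Hypothesis om0 : 0 < omega_d.

Lemma main_claim : lipschitz_claim mu coord omega_d.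
Proof.
move=> Omega eps L mubar M T0 rL rC rF J gp oO cO nO bO mD e0 L0 mu0 T00
  Jpos Jdec J0 J1 rL0 rLC rCF gpL gpinc gpdec gpF gpB [K0 gpK0].
pose K := `|K0|.
have Kp : 0 <= K by exact: normr_ge0.
have gpK : forall r s, 0 <= r -> 0 <= s -> `|gp r - gp s| <= K * `|r - s|.
  move=> r s r0 s0; apply: le_trans (gpK0 r s r0 s0) _.
  by rewrite ler_wpM2r // ler_norm.
pose C' := 2 * (2 * mubar + K).
have C'0 : 0 < C' by rewrite /C'; apply: mulr_gt0 => //; apply: ltr_wpDr => //; apply: mulr_gt0.
exists (d%:R * C') => u w [mu1 [Bu hBu] cu _] [mw1 [Bw hBw] cw _] t x ht Ox.
set D := coord @^-1` Omega.
pose N := CX_norm T0 Omega (fun s y => u s y - w s y).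
have hN : forall s y, 0 <= s <= T0 -> Omega y -> enorm (u s y - w s y) <= N.
  move=> s y hs Oy; apply: ub_le_sup; last by exists s, y.
  exists (Bu + Bw) => _ [s' [y' [hs' Oy' ->]]].
  by apply: le_trans (enormB _ _) _; apply: lerD; [apply: hBu | apply: hBw].
have N0 : 0 <= N by apply: le_trans (hN t x ht Ox); exact: enorm_ge0.
have [t0 tT] := andP ht.
have Jnn : forall r, 0 <= r -> 0 <= J r.
  move=> r r0; have [r1|r1] := ltP r 1; first by rewrite ltW // Jpos // r0.
  by rewrite J1.
have cpos : 0 < eps * (omega_d * eps ^+ d) by rewrite mulr_gt0 // mulr_gt0 // exprn_gt0.
have kern0 : forall y, 0 <= Defs.kernel Omega J omega_d eps y x.
  move=> y; rewrite /Defs.kernel divr_ge0 ?(ltW cpos) // mulr_ge0 //.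
    by case: asboolP.
  by apply: Jnn; rewrite divr_ge0 ?enorm_ge0 // ltW.
pose g z := Defs.kernel Omega J omega_d eps (coord z) x / enorm (coord z - x).
have g0 : forall z, 0 <= g z by move=> z; rewrite /g divr_ge0 ?enorm_ge0.
have sbnd : forall (v : R -> 'rV[R]_d -> 'rV[R]_d) B y tau,
    (forall t y, 0 <= t <= T0 -> Omega y -> enorm (v t y) <= B) ->
    Omega y -> 0 <= tau <= T0 -> `|strain y x (v tau)| <= (B + B) / enorm (y - x).
  move=> v B y tau hB Oy htau; apply: le_trans (strain_bnd _ _ _) _.
  by apply: ler_wpM2r; rewrite ?invr_ge0 ?enorm_ge0 // lerD // hB.
have scont : forall (v : R -> 'rV[R]_d -> 'rV[R]_d),
    (forall t, 0 <= t <= T0 -> forall e : R, 0 < e -> exists2 delta : R, 0 < delta &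
         forall s, 0 <= s <= T0 -> `|s - t| < delta ->
           forall y, Omega y -> enorm (v s y - v t y) <= e) ->
    forall y, Omega y -> forall tau, 0 <= tau <= t -> forall e : R, 0 < e ->
    exists2 del : R, 0 < del & forall s, 0 <= s <= t -> `|s - tau| < del ->
         `|strain y x (v s) - strain y x (v tau)| <= e.
  move=> v hv y Oy tau htau e ep.
  have htauT : 0 <= tau <= T0 by case/andP: htau => -> /le_trans; apply.
  have [n0|n0] := eqVneq (enorm (y - x)) 0.
    by exists 1 => // s _ _; rewrite !strain_n0 // subrr normr0 ltW.
  have np : 0 < enorm (y - x) by rewrite lt_neqAle eq_sym n0 enorm_ge0.
  have ep' : 0 < e * enorm (y - x) / 2 by rewrite divr_gt0 // mulr_gt0.
  have [del d0 hd] := hv tau htauT (e * enorm (y - x) / 2) ep'.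
  exists del => // s hs hsd.
  have hsT : 0 <= s <= T0 by case/andP: hs => -> /le_trans; apply.
  rewrite -strainB; apply: le_trans (strain_bnd _ _ _) _.
  rewrite ler_pdivrMr //; apply: le_trans (lerD (hd s hsT hsd y Oy) (hd s hsT hsd x Ox)) _.
  by rewrite le_eqVlt; apply/orP; left; apply/eqP; field.
pose F (v : R -> 'rV[R]_d -> 'rV[R]_d) (i : 'I_d) z :=
  bond_force Omega J omega_d eps gp mubar rL L v t (coord z) x 0 i.
pose Gv (v : R -> 'rV[R]_d -> 'rV[R]_d) z := Gfun mubar rL gp (Num.sqrt (enorm (coord z - x) / L))
    (strain (coord z) x (v t)) (strain_max v t (coord z) x).
have Fform : forall v i z, F v i z =
    Defs.kernel Omega J omega_d eps (coord z) x * Gv v z * bond_e (coord z) x 0 i.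
  by move=> v i z; rewrite /F /bond_force mxE; congr (_ * _); rewrite -mulrA.
pose J' r := J (Num.max r 0).
have mJ' : measurable_fun [set: R] J'.
  apply: nonincreasing_measurable => // r s rs; rewrite /J'.
  have hb : Num.max r 0 <= Num.max s 0 by rewrite ge_max !le_max rs lexx !orbT.
  have a0 : 0 <= Num.max r 0 by rewrite le_max lexx orbT.
  have [b1|b1] := ltP (Num.max s 0) 1.
    by apply: Jdec => //; rewrite a0 hb.
  by rewrite J1 // Jnn.
have mn : measurable_fun D (fun z => enorm (coord z - x)) := m_enorm hc x.
have mF : forall (v : R -> 'rV[R]_d -> 'rV[R]_d) i,
    (forall t, 0 <= t <= T0 -> forall i, measurable_fun D (fun z => v t (coord z) 0 i)) ->
    (forall t, 0 <= t <= T0 -> forall e : R, 0 < e -> exists2 delta : R, 0 < delta &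
         forall s, 0 <= s <= T0 -> `|s - t| < delta ->
           forall y, Omega y -> enorm (v s y - v t y) <= e) ->
    (exists B, forall t y, 0 <= t <= T0 -> Omega y -> enorm (v t y) <= B) ->
    measurable_fun D (F v i).
  move=> v i mv cv [B hB].
  have mS : measurable_fun D (fun z => strain (coord z) x (v t)) by apply: m_strain => //; exact: mv.
  have ms : measurable_fun D (fun z => strain_max v t (coord z) x).
    apply: m_smax => // [tau htau|z Dz].
      by apply: mv; case/andP: htau => -> /le_trans; apply.
    exists ((B + B) / enorm (coord z - x)); split; last exact: scont.
    by move=> tau htau; apply: sbnd => //; case/andP: htau => -> /le_trans; apply.
  apply: (eq_measurable_fun (fun z => (J' (enorm (coord z - x) / eps) / (eps * (omega_d * eps ^+ d)))
     * ((if strain (coord z) x (v t) <= 0 then mubar else mubar *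
          ((fun r => if r <= rL then 1 else gp r / (mubar * r))
            (Num.sqrt (enorm (coord z - x) / L) * strain_max v t (coord z) x)))
         * strain (coord z) x (v t))
     * ((enorm (coord z - x))^-1 * (coord z 0 i - x 0 i)))).
    move=> z; rewrite inE => Dz; rewrite Fform /Defs.kernel /bond_e /Gv /Gfun !mxE.
    rewrite asboolT // mul1r /J' max_l // divr_ge0 ?enorm_ge0 // ?(ltW e0) //.
  apply: measurable_funM; last first.
    apply: measurable_funM; first exact: minvD.
    by apply: measurable_funB => //; exact: mc.
  apply: measurable_funM.
    apply: measurable_funM => //.
    apply: measurableT_comp mJ' _ => //.
    by apply: measurable_funM.
  apply: measurable_funM => //.
  apply: mif => //.
    by apply: measurable_fun_ler.
  apply: measurable_funM => //.
  apply: measurableT_comp (m_phi mubar rL0 Kp gpK) _ => //.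
  apply: measurable_funM => //.
  apply: measurableT_comp (continuous_measurable_fun (@sqrt_continuous R)) _ => //.
  by apply: measurable_funM.
have ht' : 0 <= t <= t by rewrite t0 lexx.
have hsub : forall tau, 0 <= tau <= t -> 0 <= tau <= T0.
  by move=> tau; case/andP => -> /le_trans; apply.
have Gbnd : forall (v : R -> 'rV[R]_d -> 'rV[R]_d) B z,
    (forall t y, 0 <= t <= T0 -> Omega y -> enorm (v t y) <= B) -> D z ->
    `|Gv v z| <= mubar * ((B + B) / enorm (coord z - x)).
  move=> v B z hB Dz.
  have [n0|n0] := eqVneq (enorm (coord z - x)) 0.
    by rewrite /Gv /Gfun strain_n0 // mulr0 normr0 n0 invr0 !mulr0.
  have np : 0 < enorm (coord z - x) by rewrite lt_neqAle eq_sym n0 enorm_ge0.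
  have hM : forall tau, 0 <= tau <= t -> `|strain (coord z) x (v tau)| <= (B + B) / enorm (coord z - x).
    by move=> tau htau; apply: sbnd => //; exact: hsub.
  apply: le_trans (Gfun_bnd mu0 gpL gpB _ (smax_ge hM ht')) _.
    by rewrite sqrtr_gt0 divr_gt0.
  by rewrite ler_wpM2l ?(ltW mu0) // hM.
have ebnd : forall z i, `|bond_e (coord z) x 0 i| <= 1.
  by move=> z i; apply: le_trans (comp_le_enorm _ _) (enorm_bond_e _ _).
have Fbnd : forall (v : R -> 'rV[R]_d -> 'rV[R]_d) B i z,
    (forall t y, 0 <= t <= T0 -> Omega y -> enorm (v t y) <= B) -> D z ->
    `|F v i z| <= (mubar * (B + B)) * g z.
  move=> v B i z hB Dz; rewrite Fform normrM [`|_ * Gv _ _|]normrM (ger0_norm (kern0 _)).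
  apply: (@le_trans _ _ (Defs.kernel Omega J omega_d eps (coord z) x * `|Gv v z| * 1)).
    by apply: ler_wpM2l (ebnd z i); rewrite mulr_ge0.
  rewrite mulr1; apply: le_trans (ler_wpM2l (kern0 _) (Gbnd v B z hB Dz)) _.
  by rewrite /g le_eqVlt; apply/orP; left; apply/eqP; ring.
have Gdiff : forall z, D z -> `|Gv u z - Gv w z| <= (2 * mubar + K) * ((N + N) / enorm (coord z - x)).
  move=> z Dz; have Oy : Omega (coord z) by [].
  have [n0|n0] := eqVneq (enorm (coord z - x)) 0.
    by rewrite /Gv /Gfun !strain_n0 // !mulr0 subrr normr0 n0 invr0 !mulr0.
  have np : 0 < enorm (coord z - x) by rewrite lt_neqAle eq_sym n0 enorm_ge0.
  have hMu : forall tau, 0 <= tau <= t -> `|strain (coord z) x (u tau)| <= (Bu + Bu) / enorm (coord z - x).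
    by move=> tau htau; apply: sbnd => //; exact: hsub.
  have hMw : forall tau, 0 <= tau <= t -> `|strain (coord z) x (w tau)| <= (Bw + Bw) / enorm (coord z - x).
    by move=> tau htau; apply: sbnd => //; exact: hsub.
  have hd : forall tau, 0 <= tau <= t ->
      `|strain (coord z) x (u tau) - strain (coord z) x (w tau)| <= (N + N) / enorm (coord z - x).
    move=> tau htau; rewrite -strainB; apply: le_trans (strain_bnd _ _ _) _.
    by apply: ler_wpM2r; rewrite ?invr_ge0 ?enorm_ge0 // lerD // hN // hsub.
  have c0 : 0 < Num.sqrt (enorm (coord z - x) / L) by rewrite sqrtr_gt0 divr_gt0.
  apply: le_trans (Gfun_lip mu0 Kp gpL gpB gpK c0 (smax_ge hMu ht') (smax_ge hMw ht')) _.
  have h1 := hd t ht'.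
  have h2 := smax_diff t0 hMu hMw hd.
  apply: le_trans (lerD (ler_wpM2l (ltW mu0) h1) (ler_wpM2l (addr_ge0 Kp (ltW mu0)) h2)) _.
  by rewrite le_eqVlt; apply/orP; left; apply/eqP; ring.
have Fdiff : forall i z, D z -> `|F u i z - F w i z| <= C' * N * g z.
  move=> i z Dz; rewrite !Fform -mulrBl -mulrBr normrM [`|_ * (Gv _ _ - _)|]normrM (ger0_norm (kern0 _)).
  apply: (@le_trans _ _ (Defs.kernel Omega J omega_d eps (coord z) x * `|Gv u z - Gv w z| * 1)).
    by apply: ler_wpM2l (ebnd z i); rewrite mulr_ge0.
  rewrite mulr1; apply: le_trans (ler_wpM2l (kern0 _) (Gdiff z Dz)) _.
  by rewrite /g /C' le_eqVlt; apply/orP; left; apply/eqP; ring.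
have mFu : forall i, measurable_fun D (F u i) by move=> i; apply: mF => //; exists Bu.
have mFw : forall i, measurable_fun D (F w i) by move=> i; apply: mF => //; exists Bw.
have mg : measurable_fun D g.
  apply: (eq_measurable_fun (fun z => (J' (enorm (coord z - x) / eps) / (eps * (omega_d * eps ^+ d)))
     * (enorm (coord z - x))^-1)).
    move=> z; rewrite inE => Dz.
    by rewrite /g /Defs.kernel asboolT // mul1r /J' max_l // divr_ge0 ?enorm_ge0 // ?(ltW e0) //.
  apply: measurable_funM; last exact: minvD.
  apply: measurable_funM => //; apply: measurableT_comp mJ' _ => //; exact: measurable_funM.
have Pdiff : forall i,
    (peri_op mu coord Omega J omega_d eps gp mubar rL L u t x
     - peri_op mu coord Omega J omega_d eps gp mubar rL L w t x) 0 i
    = - (Rintegral mu D (F u i) - Rintegral mu D (F w i)).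
  by move=> i; rewrite !mxE opprB opprK addrC.
change ((enorm (peri_op mu coord Omega J omega_d eps gp mubar rL L u t x
             - peri_op mu coord Omega J omega_d eps gp mubar rL L w t x))%:E
     <= (d%:R * C' * N)%:E * \int[mu]_(z in D) (g z)%:E)%E.
have [NZ|Npos] := eqVneq N 0.
  have eqF : forall i, Rintegral mu D (F u i) = Rintegral mu D (F w i).
    move=> i; apply: eq_Rintegral => z; rewrite inE => Dz.
    have := Fdiff i z Dz; rewrite NZ mulr0 mul0r normr_le0 subr_eq0 => /eqP //.
  rewrite NZ mulr0 mul0e lee_fin.
  apply: le_trans (enorm_le_sum _) _.
  by rewrite big1 // => i _; rewrite Pdiff eqF subrr oppr0 normr0.
have Np : 0 < N by rewrite lt_neqAle eq_sym Npos N0.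
have I0 : (0 <= \int[mu]_(z in D) (g z)%:E)%E by apply: integral_ge0 => z _; rewrite lee_fin.
have [Ifin|Iinf] := boolP ((\int[mu]_(z in D) (g z)%:E)%E \is a fin_num); last first.
  move: Iinf; rewrite ge0_fin_numE // -leNgt leye_eq => /eqP ->.
  have [d0|dpos] := eqVneq d 0%N.
    have -> : d%:R = 0 :> R by rewrite d0.
    rewrite !mul0r mul0e lee_fin; apply: le_trans (enorm_le_sum _) _.
    by rewrite big1 // => -[m hm]; exfalso; move: hm; rewrite d0.
  have CNp : 0 < d%:R * C' * N by rewrite mulr_gt0 // mulr_gt0 // ltr0n lt0n.
  by rewrite mulry gtr0_sg // mul1e leey.
have intg : mu.-integrable D (EFin \o g).
  apply/integrableP; split; first exact/measurable_EFinP.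
  have -> : (\int[mu]_(z in D) `|(EFin \o g) z| = \int[mu]_(z in D) (g z)%:E)%E.
    apply: eq_integral => z _; rewrite /=.
    by rewrite ger0_norm.
  by rewrite -ge0_fin_numE.
have hint : forall (h : T -> R) c, measurable_fun D h ->
    (forall z, D z -> `|h z| <= c * g z) -> mu.-integrable D (EFin \o h).
  move=> h c mh hb.
  apply: (@le_integrable _ _ _ mu D mD _ (EFin \o (fun z => c * g z))).
  - exact/measurable_EFinP.
  - move=> z Dz; rewrite /=.
    by rewrite lee_fin; apply: le_trans (hb z Dz) (ler_norm _).
  - have hZ := integrableZl mD c intg.
    move: hZ; apply: eq_integrable => // z _; by rewrite /= EFinM.
have comp : forall i, `|Rintegral mu D (F u i) - Rintegral mu D (F w i)|
    <= C' * N * fine (\int[mu]_(z in D) (g z)%:E)%E.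
  move=> i.
  have iu := hint (F u i) (mubar * (Bu + Bu)) (mFu i) (fun z Dz => Fbnd u Bu i z hBu Dz).
  have iw := hint (F w i) (mubar * (Bw + Bw)) (mFw i) (fun z Dz => Fbnd w Bw i z hBw Dz).
  have mdiff : measurable_fun D (fun z => F u i z - F w i z) by apply: measurable_funB.
  have idiff := hint _ (C' * N) mdiff (Fdiff i).
  have habs : forall z, D z -> `| `|F u i z - F w i z| | <= C' * N * g z.
    by move=> z Dz; rewrite normr_id; exact: Fdiff.
  have iabs := hint (fun z => `|F u i z - F w i z|) (C' * N)
    (measurableT_comp (@normr_measurable R setT) mdiff) habs.
  have hcg : forall z, D z -> `|C' * N * g z| <= C' * N * g z.
    by move=> z _; rewrite ger0_norm // mulr_ge0 // mulr_ge0 // ltW.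
  have icg := hint (fun z => C' * N * g z) (C' * N) (measurable_funM (measurable_cst _) mg) hcg.
  rewrite -RintegralB //; apply: le_trans (le_normr_Rintegral mD idiff) _.
  apply: le_trans (le_Rintegral mD iabs icg (fun z Dz => Fdiff i z Dz)) _.
  by rewrite RintegralZl.
rewrite -(fineK Ifin) -EFinM lee_fin.
apply: le_trans (enorm_le_sum _) _.
apply: (@le_trans _ _ (\sum_(i < d) (C' * N * fine (\int[mu]_(z in D) (g z)%:E)%E))).
  by apply: ler_sum => i _; rewrite Pdiff normrN; exact: comp.
rewrite sumr_const card_ord -mulr_natl.
by rewrite le_eqVlt; apply/orP; left; apply/eqP; ring.
Qed.

End Main.


Unset Implicit Arguments. Set Strict Implicit. Set Printing Implicit Defensive.
Close Scope classical_set_scope.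
Local Open Scope ring_scope.

(* d = 2 (unit-ball volume pi) and d = 3 (unit-ball volume 4/3 pi), with Lebesgue measure *)
Theorem mainTheorem3 (R : realType) :
  lipschitz_claim (@leb2 R) (@coord2 R) pi /\
  lipschitz_claim (@leb3 R) (@coord3 R) (4 / 3 * pi).
Proof.
split; apply: main_claim.
- move=> j; rewrite (_ : (fun z => _) = (fun z : R * R => [:: z.1; z.2]`_j)); last first.
    by apply/funext => z; rewrite /coord2 mxE.
  case: j => -[|[|m]] hm //=.
  + exact: measurable_fst.
  + exact: measurable_snd.
- exact: pi_gt0.
- move=> j; rewrite (_ : (fun z => _) = (fun z : (R * R) * R => [:: z.1.1; z.1.2; z.2]`_j)); last first.
    by apply/funext => z; rewrite /coord3 mxE.
  case: j => -[|[|[|m]]] hm //=.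
  + exact: measurableT_comp measurable_fst measurable_fst.
  + exact: measurableT_comp measurable_snd measurable_fst.
  + exact: measurable_snd.
- by rewrite mulr_gt0 ?pi_gt0 // divr_gt0.
Qed.
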